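(* Let $\phi:\mathbb{R}\to\mathbb{R}^{+}$ be continuous and, for $x\in\mathbb{R}^m$, let $\Phi(x)_k=\phi(x_k)/\sum_{j=1}^m\phi(x_j)$. Let $\mathcal{X}\subset\mathbb{R}^d$ be a compact input feature space, and for each $n$ let $X^{(n)}=(x^{(n)}_1,\dots,x^{(n)}_n)\in\mathcal{X}^n$ be input features for $n$ items. Let $Q^{(n)}=\gamma(x^{(n)}_1,\dots,x^{(n)}_n)\in\mathbb{R}^{n\times d}$ and $K^{(n)}=\kappa(x^{(n)}_1,\dots,x^{(n)}_n)\in\mathbb{R}^{n\times d}$, where $\gamma,\kappa:\mathcal{X}^n\to\mathbb{R}^{n\times d}$ are continuous maps, each expressible as a composition of $L$ layers $g_L\circ f_L\circ\cdots\circ g_1\circ f_1$ (with $L$ and the layer maps not depending on $n$), where each $f_i$ is a feedforward component acting tokenwise, $f_i(z_1,\dots,z_n)_k=f_i(z_k)$, and each $g_i$ is a self $\Phi$-normalized attentional component $g_i(z_1,\dots,z_n)_k=\sum_{1\le l\le n}\alpha_{lk}v_i(z_l)$, where $v_i$ is a feedforward network and $\alpha_{lk}\in[0,1]$ are $\Phi$-normalized attention coefficients. Let $e^{(n)}_{ij}=q^{(n)}_i(k^{(n)}_j)^T$, where $q^{(n)}_i,k^{(n)}_j$ are the $i$-th row of $Q^{(n)}$ and $j$-th row of $K^{(n)}$. Then for any $\epsilon>0$ there exists $n\in\mathbb{N}$ such that for every query index $i$, $\Phi(e^{(n)}_{i,\cdot})_k<\epsilon$ for all $1\le k\le n$; that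 is, the $\Phi$-normalized attention coefficients disperse.
   Context: $\Phi$-normalized attention coefficients: for tokens $z_1,\dots,z_n$, $\alpha_{lk}=\phi(\psi_q(z)_k\psi_k(z)_l^T)/\sum_{j=1}^n\phi(\psi_q(z)_k\psi_k(z)_j^T)$, where $\psi_q,\psi_k$ are continuous query/key maps and $\phi:\mathbb{R}\to\mathbb{R}^+$ is continuous. Feedforward components and networks are continuous maps $\mathbb{R}^d\to\mathbb{R}^d$. *)

(* Defs.v *)
From Stdlib Require Lists.List.
From HB Require Import structures.
From mathcomp Require Import all_boot all_order all_algebra.
From mathcomp Require Import all_classical all_reals all_analysis.
Set Implicit Arguments. Unset Strict Implicit. Unset Printing Implicit Defensive.
Import Order.TTheory GRing.Theory Num.Theory.
Import numFieldNormedType.Exports.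
Local Open Scope ring_scope.

Definition dotv (R : realType) (d : nat) (x y : 'rV[R]_d) : R := (x *m y^T) 0 0.

Definition Phi (R : realType) (phi : R -> R) (n : nat) (x : 'I_n -> R) (k : 'I_n) : R :=
  phi (x k) / \sum_(j < n) phi (x j).

(* One layer g_i o f_i : a tokenwise feedforward component f_i followed by a
   self Phi-normalized attentional component with tokenwise query/key maps
   psi_q, psi_k and value feedforward network v_i. *)
Record layer (R : realType) (d : nat) := Layer {
  lay_f : 'rV[R]_d -> 'rV[R]_d;
  lay_psiq : 'rV[R]_d -> 'rV[R]_d;
  lay_psik : 'rV[R]_d -> 'rV[R]_d;
  lay_v : 'rV[R]_d -> 'rV[R]_d }.

Definition layer_continuous (R : realType) (d : nat) (L : layer R d) : Prop :=
  [/\ continuous (lay_f L), continuous (lay_psiq L),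
      continuous (lay_psik L) & continuous (lay_v L)].

Definition ffwd (R : realType) (d : nat) (L : layer R d) (n : nat)
  (z : 'I_n -> 'rV[R]_d) : 'I_n -> 'rV[R]_d := fun k => lay_f L (z k).

Definition alpha (R : realType) (phi : R -> R) (d : nat) (L : layer R d) (n : nat)
  (z : 'I_n -> 'rV[R]_d) (l k : 'I_n) : R :=
  Phi phi (fun j => dotv (lay_psiq L (z k)) (lay_psik L (z j))) l.

Definition attn (R : realType) (phi : R -> R) (d : nat) (L : layer R d) (n : nat)
  (z : 'I_n -> 'rV[R]_d) : 'I_n -> 'rV[R]_d :=
  fun k => \sum_(l < n) alpha phi L z l k *: lay_v L (z l).

Definition apply_layer (R : realType) (phi : R -> R) (d : nat) (L : layer R d) (n : nat)
  (z : 'I_n -> 'rV[R]_d) : 'I_n -> 'rV[R]_d := attn phi L (ffwd L z).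

(* g_L o f_L o ... o g_1 o f_1, with the list [:: L_1; ...; L_L] applied left to right *)
Definition apply_stack (R : realType) (phi : R -> R) (d : nat) (Ls : seq (layer R d))
  (n : nat) (z : 'I_n -> 'rV[R]_d) : 'I_n -> 'rV[R]_d :=
  foldl (fun z' L => apply_layer phi L z') z Ls.

(* Main.v *)
Require Import Defs.
From HB Require Import structures.
From mathcomp Require Import all_boot all_order all_algebra.
From mathcomp Require Import all_classical all_reals all_analysis.
From mathcomp Require Import ring lra.
Import Order.TTheory GRing.Theory Num.Theory.
Import numFieldNormedType.Exports.
Local Open Scope ring_scope.
Local Open Scope classical_set_scope.

Lemma cbound (R : realType) (V : normedModType R) (A : set V) :
  compact A -> exists B : R, 0 < B /\ forall y, A y -> `|y| <= B.
Proof.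
move=> /compact_bounded [M [Mreal HM]].
have h1 : M <= Num.max M 0 by rewrite le_max lexx.
have h2 : 0 <= Num.max M 0 by rewrite le_max lexx orbT.
exists (Num.max M 0 + 1); split; first lra.
move=> y Ay; apply: (HM (Num.max M 0 + 1)) => //; lra.
Qed.

Arguments cbound {R V A}.

Lemma sum_phi_gt0 (R : realType) (phi : R -> R) (phi_pos : forall x, 0 < phi x)
  n (x : 'I_n -> R) (k : 'I_n) : 0 < \sum_(j < n) phi (x j).
Proof.
rewrite (bigD1 k) //=.
have h1 := phi_pos (x k).
have h2 : 0 <= \sum_(i < n | i != k) phi (x i) by apply: sumr_ge0 => i _; apply: ltW.
lra.
Qed.

Arguments sum_phi_gt0 {R phi} phi_pos {n}.

Lemma Phi_ge0 (R : realType) (phi : R -> R) (phi_pos : forall x, 0 < phi x)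
  n (x : 'I_n -> R) (k : 'I_n) : 0 <= Phi phi x k.
Proof.
rewrite /Phi divr_ge0 //; first exact: ltW.
by apply: ltW; apply: sum_phi_gt0.
Qed.

Arguments Phi_ge0 {R phi} phi_pos {n}.

Lemma Phi_sum (R : realType) (phi : R -> R) (phi_pos : forall x, 0 < phi x)
  n (x : 'I_n -> R) (k : 'I_n) : \sum_l Phi phi x l = 1.
Proof.
rewrite /Phi -mulr_suml divff //.
by apply: lt0r_neq0; apply: sum_phi_gt0.
Qed.

Arguments Phi_sum {R phi} phi_pos {n}.

Lemma layer_bound (R : realType) (phi : R -> R) (phi_pos : forall x, 0 < phi x)
  d (L : layer R d) (A : set 'rV[R]_d) :
  layer_continuous L -> compact A ->
  exists B : R, 0 < B /\ forall n (z : 'I_n -> 'rV[R]_d), (forall i, A (z i)) ->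
    forall k, `|apply_layer phi L z k| <= B.
Proof.
case=> fc _ _ vc Ac.
have C1 : compact (lay_f L @` A) by apply: continuous_compact => //; exact: continuous_subspaceT.
have C2 : compact (lay_v L @` (lay_f L @` A)).
  by apply: continuous_compact => //; exact: continuous_subspaceT.
have [B [B0 HB]] := cbound C2.
exists B; split => // n z zA k.
rewrite /apply_layer /attn.
apply: le_trans (ler_norm_sum _ _ _) _.
apply: (@le_trans _ _ (\sum_(l < n) alpha phi L (ffwd L z) l k * B)).
  apply: ler_sum => l _; rewrite normrZ ger0_norm; last exact: Phi_ge0.
  apply: ler_wpM2l; first exact: Phi_ge0.
  apply: HB; exists (ffwd L z l) => //; exists (z l) => //.
by rewrite -mulr_suml /alpha (Phi_sum phi_pos _ k) mul1r.
Qed.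

Arguments layer_bound {R phi} phi_pos {d L A}.

Lemma ball_set_compact (R : realType) d (B : R) : 0 < B ->
  compact [set y : 'rV[R]_d | `|y| <= B].
Proof.
move=> B0.
have -> : [set y : 'rV[R]_d | `|y| <= B] = closed_ball 0 B.
  by rewrite closed_ballE // /closed_ball_; apply/seteqP; split => y /=;
    rewrite sub0r normrN.
apply: bounded_closed_compact; last exact: closed_ball_closed.
exists B; split; first by rewrite num_real.
move=> x Bx y; rewrite closed_ballE // /closed_ball_ /= sub0r normrN => hy.
by apply: le_trans hy (ltW Bx).
Qed.

Arguments ball_set_compact {R} d {B}.

Lemma stack_bound (R : realType) (phi : R -> R) (phi_pos : forall x, 0 < phi x)
  d (Ls : seq (layer R d)) :
  (forall L, List.In L Ls -> layer_continuous L) ->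
  forall (A : set 'rV[R]_d), compact A ->
  exists B : R, 0 < B /\ forall n (z : 'I_n -> 'rV[R]_d), (forall i, A (z i)) ->
    forall k, `|apply_stack phi Ls z k| <= B.
Proof.
elim: Ls => [|L Ls IH] Hc A Ac.
  have [B [B0 HB]] := cbound Ac.
  by exists B; split => // n z zA k; apply: HB.
have [B1 [B10 HB1]] := layer_bound phi_pos (Hc L (or_introl erefl)) Ac.
have [B [B0 HB]] := IH (fun L' h => Hc L' (or_intror h)) _ (ball_set_compact d B10).
exists B; split => // n z zA k.
exact: (HB n (apply_layer phi L z) (HB1 n z zA) k).
Qed.

Arguments stack_bound {R phi} phi_pos {d Ls}.

Lemma entry_bound (R : realType) d (x : 'rV[R]_d) j : `|x 0 j| <= `|x|.
Proof.
rewrite [leRHS]/Num.norm /= mx_normrE; apply/bigmax_geP; right => /=.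
by exists (0, j).
Qed.

Arguments entry_bound {R d}.

Lemma dotv_bound (R : realType) d (x y : 'rV[R]_d) (a b : R) :
  `|x| <= a -> `|y| <= b -> `|dotv x y| <= d%:R * (a * b).
Proof.
move=> xa yb.
have -> : dotv x y = \sum_(j < d) x 0 j * y 0 j.
  by rewrite /dotv !mxE; apply: eq_bigr => j _; rewrite mxE.
apply: le_trans (ler_norm_sum _ _ _) _.
apply: (@le_trans _ _ (\sum_(j < d) (a * b))).
  apply: ler_sum => j _; rewrite normrM.
  apply: ler_pM => //; apply: le_trans (entry_bound _ _) _ => //.
by rewrite sumr_const card_ord mulr_natl.
Qed.

Arguments dotv_bound {R d x y a b}.

Theorem theorem1 (R : realType) (d : nat) (phi : R -> R)
  (phi_cont : continuous phi) (phi_pos : forall x, 0 < phi x)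
  (X : set 'rV[R]_d) (X_compact : compact X)
  (Xs : forall n : nat, 'I_n -> 'rV[R]_d) (Xs_in : forall n (i : 'I_n), X (Xs n i))
  (Gam Kap : seq (layer R d))
  (Gam_cont : forall L, List.In L Gam -> layer_continuous L)
  (Kap_cont : forall L, List.In L Kap -> layer_continuous L) :
  forall eps : R, 0 < eps ->
  exists N : nat, forall n : nat, (N <= n)%N ->
    forall i k : 'I_n,
      Phi phi (fun j => dotv (apply_stack phi Gam (Xs n) i)
                             (apply_stack phi Kap (Xs n) j)) k < eps.
Proof.
move=> eps eps0.
have [Bq [Bq0 HBq]] := stack_bound phi_pos Gam_cont _ X_compact.
have [Bk [Bk0 HBk]] := stack_bound phi_pos Kap_cont _ X_compact.
set C := d%:R * (Bq * Bk).
have C0 : 0 <= C by rewrite /C mulr_ge0 // mulr_ge0 // ltW.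
have CC : - C <= C by lra.
have [cmin _ Hmin] := EVT_min CC (continuous_subspaceT phi_cont).
have [cmax _ Hmax] := EVT_max CC (continuous_subspaceT phi_cont).
set m := phi cmin. set M := phi cmax.
have m0 : 0 < m := phi_pos cmin.
exists (Num.truncn (M / (m * eps))).+1 => n Nn i k.
set x := fun j => _.
have xb : forall j, x j \in `[- C, C]%R.
  move=> j; rewrite in_itv /= -ler_norml.
  apply: dotv_bound; [exact: HBq | exact: HBk].
have S0 := sum_phi_gt0 phi_pos x k.
have Sge : m *+ n <= \sum_(j < n) phi (x j).
  have -> : m *+ n = \sum_(j < n) m by rewrite sumr_const card_ord.
  by apply: ler_sum => j _; apply: Hmin.
have Mx : phi (x k) <= M by apply: Hmax.
have nN : M / (m * eps) < n%:R.
  apply: lt_le_trans (truncnS_gt _) _; rewrite ler_nat //.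
have nN' : M < n%:R * (m * eps) by rewrite -ltr_pdivrMr // mulr_gt0.
rewrite /Phi ltr_pdivrMr //.
rewrite -mulr_natl in Sge.
have H : eps * (n%:R * m) <= eps * \sum_(j < n) phi (x j) by rewrite ler_wpM2l // ltW.
have E : n%:R * (m * eps) = eps * (n%:R * m) by rewrite [RHS]mulrC -mulrA.
rewrite E in nN'.
exact: (le_lt_trans Mx (lt_le_trans nN' H)).
Qed.
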